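(* Let $E$ be an ordered Banach space, let $A>0$, let $n\geq 1$ be an integer, and let $f:[0,A]\rightarrow E$ be a continuous $n$-convex function. Then for all $x_{1},\ldots,x_{n}\geq 0$ with $\sum_{i=1}^{n}x_{i}\leq A$, \[ f\Bigl(\sum_{i=1}^{n}x_{i}\Bigr)-\sum_{1\leq i_{1}<\cdots<i_{n-1}\leq n}f(x_{i_{1}}+\cdots+x_{i_{n-1}})+\sum_{1\leq i_{1}<\cdots<i_{n-2}\leq n}f(x_{i_{1}}+\cdots+x_{i_{n-2}})-\cdots+(-1)^{n-1}\sum_{i=1}^{n}f(x_{i})\geq(-1)^{n-1}f(0). \] Equivalently, $\sum_{\varepsilon_{1},\ldots,\varepsilon_{n}\in\{0,1\}}(-1)^{n-(\varepsilon_{1}+\cdots+\varepsilon_{n})}f(\varepsilon_{1}x_{1}+\cdots+\varepsilon_{n}x_{n})\geq 0$.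
   Context: An ordered Banach space is a Banach space $E$ with the order $x\leq y$ iff $y-x\in E_{+}$, where $E_{+}$ is a closed convex cone with $E=E_{+}-E_{+}$, $(-E_{+})\cap E_{+}=\{0\}$, and $0\leq x\leq y$ implies $\|x\|\leq\|y\|$. For distinct points $x_0,\ldots,x_n$ of an interval, the divided difference is $[x_{0},\ldots,x_{n};f]=\sum_{j=0}^{n}\frac{f(x_{j})}{\prod_{k\neq j}(x_{j}-x_{k})}$. A function $f$ (real- or $E$-valued) on an interval is $n$-convex if all its divided differences of order $n$ (on $n+1$ distinct points) are $\geq 0$. *)

(* Defs.v *)
From HB Require Import structures.
From mathcomp Require Import all_boot all_order all_algebra.
From mathcomp Require Import all_classical all_reals all_analysis.
Set Implicit Arguments. Unset Strict Implicit. Unset Printing Implicit Defensive.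
Import Order.TTheory GRing.Theory Num.Theory.
Import numFieldNormedType.Exports.
Local Open Scope classical_set_scope.
Local Open Scope ring_scope.

(* An ordered Banach space: a Banach space E (complete normed space over R)
   together with a positive cone P = E_+ which is a closed convex cone,
   generating (E = E_+ - E_+), pointed ((-E_+) ∩ E_+ = {0}) and such that the
   norm is monotone (0 <= x <= y implies |x| <= |y|).  x <= y iff y - x \in P. *)
Definition ordered_banach_cone (R : realType) (E : completeNormedModType R)
  (P : set E) : Prop :=
  closed P /\
  (forall x y, P x -> P y -> P (x + y)) /\
  (forall (a : R) x, 0 <= a -> P x -> P (a *: x)) /\
  (forall x, exists y z, [/\ P y, P z & x = y - z]) /\
  (forall x, P x -> P (- x) -> x = 0) /\
  (forall x y, P x -> P (y - x) -> `|x| <= `|y|).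

Definition divdiff (R : realType) (E : normedModType R) (m : nat)
  (x : 'I_m -> R) (f : R -> E) : E :=
  \sum_(j < m) (\prod_(k < m | k != j) (x j - x k))^-1 *: f (x j).

Definition nconvex (R : realType) (E : normedModType R) (P : set E)
  (n : nat) (A : R) (f : R -> E) : Prop :=
  forall x : 'I_n.+1 -> R, injective x ->
    (forall i, 0 <= x i <= A) -> P (divdiff x f).

(* Main.v *)
Require Import Defs.
From HB Require Import structures.
From mathcomp Require Import all_boot all_order all_algebra.
From mathcomp Require Import all_classical all_reals all_analysis.
From mathcomp Require Import zify ring lra.
Import Order.TTheory GRing.Theory Num.Theory.
Import numFieldNormedType.Exports.
Local Open Scope classical_set_scope.
Local Open Scope ring_scope.
Lemma split_sum (I : finType) (V : zmodType) (i : I) (G : {set I} -> V) :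
  \sum_(S : {set I}) G S = \sum_(S : {set I} | i \notin S) (G S + G (i |: S)).
Proof.
rewrite [LHS](bigID (fun S : {set I} => i \in S)) /= addrC big_split /=; congr (_ + _).
rewrite (reindex_onto (fun S => i |: S) (fun S => S :\ i)) /=.
  apply: eq_bigl => S; rewrite finset.setU11 /=.
  case: (boolP (i \in S)) => iS.
    apply/negbTE/eqP => h; move: iS; rewrite -h; by rewrite finset.setD11.
  by rewrite finset.setU1K // eqxx.
by move=> S iS; rewrite finset.setD1K.
Qed.

Lemma sign_step (R : ringType) (n t : nat) : (t < n)%N ->
  (-1) ^+ (n - t.+1) = - ((-1) ^+ (n - t)) :> R.
Proof.
move=> tn; have -> : (n - t = (n - t.+1).+1)%N by lia.
by rewrite exprS mulN1r opprK.
Qed.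

Section Discrete.
Variables (R : ringType) (V : lmodType R) (n : nat) (F : nat -> V).

Definition Phi (k : 'I_n -> nat) (m : nat) : V :=
  \sum_(S : {set 'I_n}) (-1) ^+ (n - #|S|) *: F (m + \sum_(j in S) k j)%N.

Lemma Phi_split (i : 'I_n) k m : Phi k m =
  \sum_(T : {set 'I_n} | i \notin T) (-1) ^+ (n - #|T|) *:
     (F (m + \sum_(j in T) k j)%N - F (m + \sum_(j in T) k j + k i)%N).
Proof.
rewrite /Phi (@split_sum _ _ i); apply: eq_bigr => T iT.
rewrite big_setU1 //= cardsU1 iT add1n sign_step; last first.
  have := max_card (i |: T); rewrite cardsU1 iT card_ord.
  by rewrite add1n.
by rewrite scaleNr scalerBr [(k i + _)%N]addnC addnA.
Qed.

Lemma Phi_upd (i : 'I_n) k a (T : {set 'I_n}) : i \notin T ->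
  (\sum_(j in T) (if j == i then a else k j) = \sum_(j in T) k j)%N.
Proof.
move=> iT; apply: eq_bigr => j jT; case: eqP => // eji.
by move: iT; rewrite -eji jT.
Qed.

Lemma Phi_decomp (i : 'I_n) k m : (1 < k i)%N ->
  Phi k m = Phi (fun j => if j == i then 1%N else k j) m +
            Phi (fun j => if j == i then (k i).-1 else k j) m.+1.
Proof.
move=> ki.
rewrite !(Phi_split i) -big_split /=; apply: eq_bigr => T iT.
rewrite !Phi_upd // !eqxx -scalerDr; congr (_ *: _).
set c := (\sum_(j in T) k j)%N.
have -> : (m.+1 + c = m + c + 1)%N by lia.
have -> : (m + c + 1 + (k i).-1 = m + c + k i)%N by lia.
by rewrite addrA subrK.
Qed.

Lemma sum_upd (i : 'I_n) k a :
  (\sum_j (if j == i then a else k j) + k i = \sum_j k j + a)%N.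
Proof.
rewrite (bigD1 i) //= [in RHS](bigD1 i) //= eqxx.
have -> : (\sum_(j | j != i) (if j == i then a else k j) = \sum_(j | j != i) k j)%N.
  by apply: eq_bigr => j /negbTE ->.
ring.
Qed.

Lemma discrete (P : set V) (P0 : P 0) (PD : forall x y, P x -> P y -> P (x + y))
  (M : nat) :
  (forall m, (m + n <= M)%N -> P (\sum_(S : {set 'I_n}) (-1) ^+ (n - #|S|) *: F (m + #|S|)%N)) ->
  forall k m, (m + \sum_j k j <= M)%N -> P (Phi k m).
Proof.
move=> H k; have [N] := ubnP (\sum_j k j)%N; elim: N k => // N IH k hk m hm.
case: (boolP [exists i, (1 < k i)%N]) => [/existsP [i ki]|].
  rewrite (Phi_decomp i k m ki); apply: PD; apply: IH.
  - have := sum_upd i k 1; move: hk ki; set s := (\sum_j k j)%N; set t := (\sum_j _)%N; set u := k i; lia.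
  - have := sum_upd i k 1; move: hm ki; set s := (\sum_j k j)%N; set t := (\sum_j _)%N; set u := k i; lia.
  - have := sum_upd i k (k i).-1; move: hk ki; set s := (\sum_j k j)%N; set t := (\sum_j _)%N; set u := k i; lia.
  - have := sum_upd i k (k i).-1; move: hm ki; set s := (\sum_j k j)%N; set t := (\sum_j _)%N; set u := k i; lia.
rewrite negb_exists => /forallP kle.
case: (boolP [forall i, k i == 1%N]) => [/forallP k1|].
  have ek : forall S : {set 'I_n}, (\sum_(j in S) k j = #|S|)%N.
    by move=> S; rewrite -sum1_card; apply: eq_bigr => j _; apply/eqP.
  rewrite /Phi (eq_bigr (fun S : {set 'I_n} => (-1) ^+ (n - #|S|) *: F (m + #|S|)%N)).
    apply: H; move: hm; rewrite (eq_bigr (fun _ => 1%N)); last by move=> j _; apply/eqP.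
    by rewrite sum1_card card_ord.
  by move=> S _; rewrite ek.
rewrite negb_forall => /existsP [i ki].
have k0 : k i = 0%N by move: (kle i) ki; case: (k i) => [|[|]].
rewrite (Phi_split i) big1 // => T _; by rewrite k0 addn0 subrr scaler0.
Qed.
End Discrete.
Section Prod.
Variable R : realType.

Definition q (j m : nat) : R :=
  \prod_(0 <= k < m) (if k == j then 1 else (j%:R - k%:R)).

Lemma q_low (j m : nat) : (m <= j)%N -> q j m * (j - m)`!%:R = j`!%:R.
Proof.
elim: m => [|m IH] hm.
  by rewrite /q big_geq // mul1r subn0.
rewrite /q big_nat_recr //= -/(q j m).
have -> : (m == j) = false by apply/negbTE; rewrite neq_ltn hm.
rewrite -IH; last by lia.
have -> : (j - m = (j - m.+1).+1)%N by lia.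
rewrite factS natrM -mulrA; congr (_ * _).
rewrite -natrB; last by lia.
by have -> : (j - m = (j - m.+1).+1)%N by lia.
Qed.

Lemma q_high (j t : nat) : q j (j.+1 + t) = (-1) ^+ t * (j`! * t`!)%:R.
Proof.
elim: t => [|t IH].
  rewrite addn0 /q big_nat_recr //= -/(q j j) eqxx mulr1.
  by have := @q_low j j (leqnn j); rewrite subnn fact0 mulr1 => ->; rewrite expr0 mul1r muln1.
rewrite addnS /q big_nat_recr //= -/(q j (j.+1 + t)) IH.
have -> : (j.+1 + t == j) = false by apply/negbTE; rewrite neq_ltn; apply/orP; right; lia.
rewrite factS !natrM exprS.
have -> : (j%:R - (j.+1 + t)%:R : R) = - (t.+1)%:R.
  have -> : ((j.+1 + t)%:R : R) = j%:R + t.+1%:R by rewrite -natrD addSnnS.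
  by rewrite opprD addrA subrr add0r.
ring.
Qed.

Lemma q_full (n j : nat) : (j <= n)%N -> q j n.+1 = (-1) ^+ (n - j) * (j`! * (n - j)`!)%:R.
Proof. by move=> jn; rewrite -q_high; congr (q _ _); lia. Qed.

End Prod.

Lemma group_card (R : ringType) (V : lmodType R) (n : nat) (G : nat -> V) :
  \sum_(S : {set 'I_n}) G #|S| = \sum_(j < n.+1) G j *+ 'C(n, j).
Proof.
rewrite (partition_big (fun S : {set 'I_n} => (inord #|S| : 'I_n.+1)) xpredT) //=.
apply: eq_bigr => j _.
rewrite (eq_bigl (fun S : {set 'I_n} => #|S| == j)); last first.
  move=> S /=; rewrite -val_eqE /= inordK // ltnS.
  by have := max_card S; rewrite card_ord.
rewrite (eq_bigr (fun _ => G j)); last by move=> S /eqP ->.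
rewrite sumr_const; congr (_ *+ _).
by have := card_draws 'I_n j; rewrite card_ord cardsE.
Qed.

Lemma prod_q (R : realType) (n : nat) (j : 'I_n.+1) :
  \prod_(k < n.+1 | k != j) ((j : nat)%:R - (k : nat)%:R : R) = q R j n.+1.
Proof.
rewrite big_mkcond /q big_mkord /=; apply: eq_bigr => k _.
case: (k =P j) => [->|/eqP ne]; first by rewrite !eqxx.
have -> : (nat_of_ord k == nat_of_ord j) = false by apply/negbTE. by [].
Qed.

Lemma divdiff_eq (R : realType) (E : normedModType R) n a h (f : R -> E) : 0 < h ->
  \sum_(S : {set 'I_n}) (-1) ^+ (n - #|S|) *: f (a + #|S|%:R * h) =
  (h ^+ n * n`!%:R) *: divdiff (fun j : 'I_n.+1 => a + (j : nat)%:R * h) f.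
Proof.
move=> hp.
rewrite (@group_card _ _ n (fun t => (-1) ^+ (n - t) *: f (a + t%:R * h))) /divdiff scaler_sumr.
apply: eq_bigr => j _.
rewrite scalerA scalerMnl; congr (_ *: _).
rewrite (eq_bigr (fun k : 'I_n.+1 => h * ((j:nat)%:R - (k:nat)%:R))); last by move=> k _; ring.
rewrite big_split /= prod_q prodr_const cardC1 card_ord /= q_full; last by rewrite -ltnS.
have jn : (j <= n)%N by rewrite -ltnS.
rewrite -(bin_fact jn) -mulr_natr.
set s := (-1) ^+ (n - j) : R.
have sV : s^-1 = s by rewrite /s invr_sign.
have hn : h ^+ n != 0 by rewrite expf_neq0 // gt_eqF.
have D : (j`! * (n - j)`!)%:R != 0 :> R by rewrite pnatr_eq0 -lt0n muln_gt0 !fact_gt0.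
move: D; set d := (j`! * (n - j)`!)%N => D.
rewrite natrM !invfM sV.
transitivity (s * 'C(n, j)%:R * ((h ^+ n * h ^- n) * (d%:R * d%:R^-1))); last by ring.
by rewrite mulfV // mulfV // !mulr1.
Qed.
Lemma my_cvg_sum (R : realType) (V : normedModType R) (I : Type) (r : seq I) (Pr : pred I)
  (u : I -> nat -> V) (a : I -> V) :
  (forall i, Pr i -> u i @ \oo --> a i) ->
  (fun N => \sum_(i <- r | Pr i) u i N) @ \oo --> \sum_(i <- r | Pr i) a i.
Proof.
move=> cu; elim: r => [|i r IH].
  rewrite big_nil; under eq_cvg do rewrite big_nil; exact: cvg_cst.
rewrite big_cons; under eq_cvg do rewrite big_cons.
case: ifPn => Pi //.
exact: cvgD (cu i Pi) IH.
Qed.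

Lemma seq_within (R : realType) (V : topologicalType) (D : set R) (f : R -> V) (y : R)
  (yN : nat -> R) :
  {within D, continuous f} -> D y -> (forall N, D (yN N)) -> yN @ \oo --> y ->
  (fun N => f (yN N)) @ \oo --> f y.
Proof.
move=> fc Dy DN cy.
have := (proj1 (subspace_continuousP D f) fc y Dy) => cf.
apply: cvg_comp cf.
move=> B /= hB.
have := cy _ hB.
move=> h; apply: (@filterS _ _ _ (fun N => D (yN N) -> B (yN N))) => [N|]; [apply; exact: DN | exact: h].
Qed.

Theorem theorem3p1 (R : realType) (E : completeNormedModType R) (P : set E)
  (A : R) (n : nat) (f : R -> E) :
  ordered_banach_cone P -> 0 < A -> (1 <= n)%N ->
  {within `[0, A], continuous f} ->
  nconvex P n A f ->
  forall x : 'I_n -> R, (forall i, 0 <= x i) -> \sum_(i < n) x i <= A ->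
  P (\sum_(S : {set 'I_n}) (-1) ^+ (n - #|S|) *: f (\sum_(i in S) x i)).
Proof.
move=> [Pcl [PD [PZ [Pgen _]]]] A0 n1 fc fconv x x0 xA.
have P0 : P 0 by have [y [z [Py _ _]]] := Pgen 0; rewrite -(scale0r y); exact: PZ.
pose h (N : nat) : R := N.+1%:R^-1.
have hgt0 N : 0 < h N by rewrite invr_gt0 ltr0n.
pose kk (N : nat) (i : 'I_n) := Num.truncn (x i * N.+1%:R).
have kkle N i : (kk N i)%:R * h N <= x i.
  rewrite ler_pdivrMr ?ltr0n // truncn_le mulr_ge0 // ler0n.
have kkge N i : x i - h N <= (kk N i)%:R * h N.
  rewrite lerBlDr.
  have := truncnS_gt (x i * N.+1%:R).
  rewrite -ltr_pdivlMr ?ltr0n // => /ltW.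
  by rewrite -/(kk N i) mulrSr mulrDl mul1r.
have sumS (S : {set 'I_n}) : \sum_(j in S) x j <= A.
  apply: le_trans xA.
  rewrite [X in _ <= X](bigID (mem S)) /= lerDl; exact: sumr_ge0.
have Pu N : P (@Phi R E n (fun m => f (m%:R * h N)) (kk N) 0).
  apply: (@discrete R E n (fun m => f (m%:R * h N)) P P0 PD (\sum_i kk N i)); last by rewrite add0n.
  move=> m hm.
  have -> : \sum_(S : {set 'I_n}) (-1)^+(n-#|S|) *: f ((m + #|S|)%:R * h N) =
     \sum_(S : {set 'I_n}) (-1)^+(n - #|S|) *: f (m%:R * h N + #|S|%:R * h N).
    by apply: eq_bigr => S _; rewrite natrD mulrDl.
  rewrite divdiff_eq //; apply: PZ.
    by rewrite mulr_ge0 // ?exprn_ge0 ?ltW // ler0n.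
  apply: fconv.
    move=> i j /= /addrI /(mulIf (negbT (gt_eqF (hgt0 N)))) /eqP; rewrite eqr_nat => /eqP.
    exact: val_inj.
  move=> i; apply/andP; split.
    by rewrite addr_ge0 // mulr_ge0 ?ler0n ?ltW.
  rewrite -mulrDl -natrD.
  apply: (@le_trans _ _ ((\sum_i kk N i)%:R * h N)).
    rewrite ler_wpM2r ?(ltW (hgt0 N)) // ler_nat.
    have := ltn_ord i; lia.
  rewrite natr_sum mulr_suml; apply: le_trans xA.
  by apply: ler_sum => i0 _; exact: kkle.
have cu : (fun N => @Phi R E n (fun m => f (m%:R * h N)) (kk N) 0) @ \oo -->
   \sum_(S : {set 'I_n}) (-1) ^+ (n - #|S|) *: f (\sum_(i in S) x i).
  rewrite /Phi; apply: my_cvg_sum => S _.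
  apply: cvgZ; first exact: cvg_cst.
  apply: (@seq_within R E _ f _ (fun N => (0 + \sum_(j in S) kk N j)%:R * h N) fc).
  - by rewrite /= in_itv /= sumS sumr_ge0.
  - move=> N; rewrite /= in_itv /=; apply/andP; split.
      by rewrite mulr_ge0 ?ler0n ?ltW.
    rewrite add0n natr_sum mulr_suml; apply: le_trans (sumS S).
    by apply: ler_sum => i _; exact: kkle.
  under eq_cvg do rewrite add0n natr_sum mulr_suml.
  apply: my_cvg_sum => j _.
  apply: (@squeeze_cvgr _ _ _ _ (fun N => x j - h N) (fun N => x j)).
  - by apply: nearW => N; rewrite kkge kkle.
  - have := cvgB (cvg_cst (x j)) (@cvg_harmonic R); rewrite subr0; exact.
  - exact: cvg_cst.
apply: (closed_cvg _ Pcl _ _ cu). by apply: nearW.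
Qed.
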